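(* If a regular curve $\gamma: I\to\mathbb{E}^4$ admits a generalized Bishop frame of type F, then it admits a generalized Bishop frame of type D.
   Context: A regular curve $\gamma: I\to\mathbb{E}^4$ ($I$ an open interval) is considered with arc-length parametrization; $\mathbb{T}=\gamma'$ is its unit tangent vector. A frame on $\gamma$ is an ordered orthonormal frame $(\mathbb{T},\mathbb{Z}_1,\mathbb{Z}_2,\mathbb{Z}_3)$ of smooth vector fields along $\gamma$ whose first vector is $\mathbb{T}$; it is identified with the smooth map $\mathbb{Z}: I\to O(4)$ whose rows are these vectors. Its coefficient matrix is the $\mathfrak{o}(4)$-valued function $X$ with $\mathbb{Z}'=X\mathbb{Z}$. A frame is of type D, resp. F, if, after possibly permuting $\mathbb{Z}_1,\mathbb{Z}_2,\mathbb{Z}_3$ (keeping $\mathbb{T}$ first), its coefficient matrix has the form, for some smooth functions $x_1,x_2,x_3$ (no sign conditions): Type D: $\begin{pmatrix}0&x_1&0&0\\-x_1&0&x_2&x_3\\0&-x_2&0&0\\0&-x_3&0&0\end{pmatrix}$; Type F: $\begin{pmatrix}0&x_1&0&0\\-x_1&0&x_2&0\\0&-x_2&0&x_3\\0&0&-x_3&0\end{pmatrix}$. *)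

(* Defs.v *)
From HB Require Import structures.
From mathcomp Require Import all_boot all_order all_fingroup all_algebra.
From mathcomp Require Import all_classical all_reals all_analysis.
Set Implicit Arguments. Unset Strict Implicit. Unset Printing Implicit Defensive.
Import Order.TTheory GRing.Theory Num.Theory.
Import numFieldNormedType.Exports.
Local Open Scope classical_set_scope.
Local Open Scope ring_scope.

Section Defs.
Variable R : realType.

Definition oint (a b : \bar R) : set R := [set x | (a < x%:E < b)%E].

Definition smooth_on (I : set R) (f : R -> R) : Prop :=
  forall (n : nat) (x : R), I x -> derivable (derive1n n f) x 1.

Definition comp (gamma : R -> 'rV[R]_4) (j : 'I_4) : R -> R :=
  fun t => gamma t 0 j.

Definition arclength_curve (I : set R) (gamma : R -> 'rV[R]_4) : Prop :=
  (forall j, smooth_on I (comp gamma j)) /\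
  (forall t, I t -> \sum_(j < 4) (derive1 (comp gamma j) t) ^+ 2 = 1).

Definition is_frame (I : set R) (gamma : R -> 'rV[R]_4) (Z : R -> 'M[R]_4)
  : Prop :=
  (forall i j, smooth_on I (fun t => Z t i j)) /\
  (forall t, I t -> Z t *m (Z t)^T = 1%:M) /\
  (forall t, I t -> forall j, Z t 0 j = derive1 (comp gamma j) t).

Definition shapeD (x1 x2 x3 : R) : 'M[R]_4 :=
  \matrix_(i, j)
    match nat_of_ord i, nat_of_ord j with
    | 0, 1 => x1 | 1, 0 => - x1
    | 1, 2 => x2 | 2, 1 => - x2
    | 1, 3 => x3 | 3, 1 => - x3
    | _, _ => 0 end.

Definition shapeF (x1 x2 x3 : R) : 'M[R]_4 :=
  \matrix_(i, j)
    match nat_of_ord i, nat_of_ord j with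
    | 0, 1 => x1 | 1, 0 => - x1
    | 1, 2 => x2 | 2, 1 => - x2
    | 2, 3 => x3 | 3, 2 => - x3
    | _, _ => 0 end.

(* The frame Z has, after a permutation s of Z1,Z2,Z3 (s fixes index 0,
   the tangent), a coefficient matrix of the given shape:
   (Zs)' = shape(x1,x2,x3) Zs on I, where Zs has rows Z_{s 0},...,Z_{s 3}. *)
Definition frame_of_shape (I : set R) (shape : R -> R -> R -> 'M[R]_4)
  (Z : R -> 'M[R]_4) : Prop :=
  exists s : 'S_4, s 0 = 0 /\
  exists x1 x2 x3 : R -> R,
    smooth_on I x1 /\ smooth_on I x2 /\ smooth_on I x3 /\
    forall t, I t -> forall i j : 'I_4,
      derive1 (fun u => Z u (s i) j) t =
      (shape (x1 t) (x2 t) (x3 t) *m (\matrix_(k, l) Z t (s k) l)) i j.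

Definition admits_frame_of_type (I : set R) (gamma : R -> 'rV[R]_4)
  (shape : R -> R -> R -> 'M[R]_4) : Prop :=
  exists Z : R -> 'M[R]_4, is_frame I gamma Z /\ frame_of_shape I shape Z.

End Defs.

(* Main.v *)
Require Import Defs.
From HB Require Import structures.
From mathcomp Require Import all_boot all_order all_fingroup all_algebra.
From mathcomp Require Import all_classical all_reals all_analysis.
From mathcomp Require Import ring lra.
Set Implicit Arguments. Unset Strict Implicit. Unset Printing Implicit Defensive.
Import Order.TTheory GRing.Theory Num.Theory.
Import numFieldNormedType.Exports.
Local Open Scope classical_set_scope.
Local Open Scope ring_scope.

Section Smooth.
Variable R : realType.
Variable I : set R.
Hypothesis Iopen : forall x, I x -> \forall y \near x, I y.

Definition eqI (f g : R -> R) := forall x, I x -> f x = g x.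

Lemma derive1_eqI f g : eqI f g -> eqI (derive1 f) (derive1 g).
Proof.
move=> fg x Ix; rewrite !derive1E; apply: near_eq_derive.
by apply: filterS (Iopen Ix) => y /fg.
Qed.

Lemma derivable_eqI f g x : eqI f g -> I x -> derivable f x 1 -> derivable g x 1.
Proof.
move=> fg Ix; apply: near_eq_derivable.
by apply: filterS (Iopen Ix) => y /fg.
Qed.

Lemma derive1n_eqI n f g : eqI f g -> eqI (derive1n n f) (derive1n n g).
Proof.
elim: n => [//|n IH] fg; rewrite !derive1nS; exact/derive1_eqI/IH.
Qed.

Definition sm n (f : R -> R) := forall k, (k <= n)%N -> forall x, I x -> derivable (derive1n k f) x 1.

Lemma derive1nSr n (f : R -> R) : derive1n n.+1 f = derive1n n (derive1 f).
Proof. by rewrite /derive1n iterSr. Qed.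

Lemma smS n f : sm n.+1 f <-> (forall x, I x -> derivable f x 1) /\ sm n (derive1 f).
Proof.
split.
  move=> h; split; first exact: (h 0%N).
  by move=> k kn x Ix; rewrite -derive1nSr; apply: h.
move=> [h0 h] [|k] kn x Ix; first exact: h0.
by rewrite derive1nSr; apply: h.
Qed.

Lemma sm_eqI n f g : eqI f g -> sm n f -> sm n g.
Proof.
move=> fg h k kn x Ix; apply: (derivable_eqI (derive1n_eqI k fg) Ix).
exact: h.
Qed.

Lemma sm_le m n f : (m <= n)%N -> sm n f -> sm m f.
Proof. by move=> mn h k km; apply: h; exact: leq_trans km mn. Qed.

Lemma sm_cst n c : sm n (fun _ => c).
Proof.
elim: n c => [|n IH] c.
  by move=> [|//] _ x _; exact: derivable_cst.
apply/smS; split; first by move=> x _; exact: derivable_cst.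
apply: sm_eqI (IH 0) => x _ /=; rewrite derive1E derive_cst //.
Qed.

Lemma sm_add n f g : sm n f -> sm n g -> sm n (fun t => f t + g t).
Proof.
elim: n f g => [|n IH] f g hf hg.
  move=> [|//] _ x Ix; exact: derivableD (hf 0%N isT x Ix) (hg 0%N isT x Ix).
move/smS: hf => [df hf]; move/smS: hg => [dg hg].
apply/smS; split; first by move=> x Ix; exact: derivableD (df x Ix) (dg x Ix).
apply: sm_eqI (IH _ _ hf hg) => x Ix /=.
by rewrite !derive1E -(deriveD (df x Ix) (dg x Ix)).
Qed.

Lemma sm_opp n f : sm n f -> sm n (fun t => - f t).
Proof.
elim: n f => [|n IH] f hf.
  move=> [|//] _ x Ix; exact: derivableN (hf 0%N isT x Ix).
move/smS: hf => [df hf].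
apply/smS; split; first by move=> x Ix; exact: derivableN (df x Ix).
apply: sm_eqI (IH _ hf) => x Ix /=.
by rewrite !derive1E -(deriveN (df x Ix)).
Qed.

Lemma sm_mul n f g : sm n f -> sm n g -> sm n (fun t => f t * g t).
Proof.
elim: n f g => [|n IH] f g hf hg.
  move=> [|//] _ x Ix; exact: derivableM (hf 0%N isT x Ix) (hg 0%N isT x Ix).
have hf' := sm_le (leqnSn n) hf; have hg' := sm_le (leqnSn n) hg.
move/smS: hf => [df hf]; move/smS: hg => [dg hg].
apply/smS; split; first by move=> x Ix; exact: derivableM (df x Ix) (dg x Ix).
apply: sm_eqI (sm_add (IH _ _ hf' hg) (IH _ _ hg' hf)) => x Ix /=.
rewrite !derive1E. by have := deriveM (df x Ix) (dg x Ix); move=> <-.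
Qed.

Lemma sm_cos_sin n f : sm n f -> sm n (fun t => cos (f t)) /\ sm n (fun t => sin (f t)).
Proof.
elim: n f => [|n IH] f hf.
  split; move=> [|//] _ x Ix.
    have := is_derive1_comp (is_derive_cos (f x)) (derivableP (hf 0%N isT x Ix)).
    by case.
  have := is_derive1_comp (is_derive_sin (f x)) (derivableP (hf 0%N isT x Ix)).
  by case.
have hf' := sm_le (leqnSn n) hf.
have [hc hs] := IH _ hf'.
move/smS: hf => [df hf].
split; apply/smS; split.
- move=> x Ix.
  have := is_derive1_comp (is_derive_cos (f x)) (derivableP (df x Ix)).
  by case.
- apply: sm_eqI (sm_mul (sm_opp hs) hf) => x Ix /=.
  have := is_derive1_comp (is_derive_cos (f x)) (derivableP (df x Ix)).
  case=> _ h; rewrite [RHS]derive1E (_ : (fun t => cos (f t)) = cos \o f) // h.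
  by rewrite derive1E.
- move=> x Ix.
  have := is_derive1_comp (is_derive_sin (f x)) (derivableP (df x Ix)).
  by case.
- apply: sm_eqI (sm_mul hc hf) => x Ix /=.
  have := is_derive1_comp (is_derive_sin (f x)) (derivableP (df x Ix)).
  case=> _ h; rewrite [RHS]derive1E (_ : (fun t => sin (f t)) = sin \o f) // h.
  by rewrite derive1E.
Qed.

Lemma smoothP f : smooth_on I f <-> forall n, sm n f.
Proof.
split; first by move=> h n k _ x Ix; exact: h.
by move=> h n x Ix; exact: (h n n (leqnn n)).
Qed.

End Smooth.
Lemma derive_subk (R : realType) (F : R -> R) (k x : R) : derivable F x 1 ->
  derivable (fun y => F y - k) x 1 /\ 'D_1 (fun y => F y - k) x = 'D_1 F x.
Proof.
move=> dF; split.
  by have := derivableB dF (derivable_cst k x 1).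
have := deriveB dF (derivable_cst k x 1); rewrite derive_cst subr0 => <-.
by [].
Qed.

Section Anti.
Variable R : realType.
Variables a b : \bar R.
Hypothesis ab : (a < b)%E.
Let I := oint a b.

Lemma oint_open x : I x -> \forall y \near x, I y.
Proof.
rewrite /I /oint /= => /andP[ax xb].
have h1 : \forall y \near x, (a < y%:E)%E.
  move: ax; case: a => [r| |] //= ax.
    by rewrite lte_fin in ax; apply: filterS (lt_nbhsr ax) => y ry; rewrite lte_fin.
  by near=> y; exact: ltNyr.
have h2 : \forall y \near x, (y%:E < b)%E.
  move: xb; case: b => [r| |] //= xb.
    by rewrite lte_fin in xb; apply: filterS (lt_nbhsl xb) => y ry; rewrite lte_fin.
  by near=> y; exact: ltry.
by near=> y; apply/andP; split; near: y.
Unshelve. all: by end_near. Qed.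

Lemma oint_conv u v w : I u -> I w -> u <= v -> v <= w -> I v.
Proof.
rewrite /I /oint /= => /andP[au _] /andP[_ wb] uv vw; apply/andP; split.
  by apply: (lt_le_trans au); rewrite lee_fin.
by apply: le_lt_trans wb; rewrite lee_fin.
Qed.

Definition low (y : R) : R := match a with EFin r => (r + y) / 2 | _ => y - 1 end.
Definition high (y : R) : R := match b with EFin r => (y + r) / 2 | _ => y + 1 end.

Lemma low_prop y : I y -> low y < y /\ I (low y).
Proof.
rewrite /I /oint /low /= => /andP[ay yb].
have lt : (match a with EFin r => (r + y) / 2 | _ => y - 1 end) < y.
  move: ay; case: a => [r| |] //= ay; last lra.
  rewrite lte_fin in ay; lra.
split => //; apply/andP; split; last first.
  by apply: lt_trans yb; rewrite lte_fin.
move: ay lt; case: a => [r| |] //= ay _; last exact: ltNyr.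
rewrite lte_fin in ay; rewrite lte_fin; lra.
Qed.

Lemma high_prop y : I y -> y < high y /\ I (high y).
Proof.
rewrite /I /oint /high /= => /andP[ay yb].
have lt : y < (match b with EFin r => (y + r) / 2 | _ => y + 1 end).
  move: yb; case: b => [r| |] //= yb; last lra.
  rewrite lte_fin in yb; lra.
split => //; apply/andP; split.
  by apply: lt_trans ay _; rewrite lte_fin.
move: yb lt; case: b => [r| |] //= yb _; last exact: ltry.
rewrite lte_fin in yb; rewrite lte_fin; lra.
Qed.

Lemma oint_ex : exists c, I c.
Proof.
rewrite /I /oint /=; move: ab.
case: a => [r| |]; case: b => [s| |] //= rs.
- exists ((r + s) / 2); rewrite !lte_fin; rewrite lte_fin in rs; apply/andP; split; lra.
- by exists (r + 1); rewrite lte_fin ltry andbT; lra.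
- by exists (s - 1); rewrite lte_fin ltNyr /=; lra.
- by exists 0; rewrite ltNyr ltry.
Qed.

Variable f : R -> R.
Hypothesis fc : forall x, I x -> {for x, continuous f}.
Let mu := @lebesgue_measure R.
Definition IntF u w := (\int[mu]_(t in `[u, w]) f t)%R.

Lemma intg u w : I u -> I w -> mu.-integrable `[u, w] (EFin \o f).
Proof.
move=> Iu Iw; apply: continuous_compact_integrable; first exact: segment_compact.
apply: continuous_in_subspaceT => z; rewrite inE /= in_itv /= => /andP[uz zw].
apply: fc; exact: oint_conv Iu Iw uz zw.
Qed.

Lemma IntF_add u v w : I u -> I w -> u <= v -> v <= w ->
  IntF u w = IntF u v + IntF v w.
Proof.
move=> Iu Iw uv vw.
have Iv := oint_conv Iu Iw uv vw.
have := @Rintegral_itvB R f (BLeft u) (BRight w) v (intg Iu Iw).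
rewrite !bnd_simp => /(_ uv vw).
rewrite Rintegral_itv_obnd_cbnd; last first.
  apply: integrableS (intg Iv Iw) => //; exact: subset_itv_oc_cc.
move=> h; rewrite /IntF -h; lra.
Qed.

Variable c : R.
Hypothesis Ic : I c.
Definition qq t := low (Num.min t c).
Definition Fa t := IntF (qq t) t - IntF (qq t) c.

Lemma shiftF m p t : I m -> I p -> I t -> m <= p -> p <= t -> p <= c ->
  IntF p t - IntF p c = IntF m t - IntF m c.
Proof.
move=> Im Ip It mp pt pc.
rewrite (IntF_add Im It mp pt) (IntF_add Im Ic mp pc); lra.
Qed.

Lemma I_min t : I t -> I (Num.min t c).
Proof. by move=> It; have [tc|ct] := leP t c. Qed.

Lemma Fa_eq p t : I p -> I t -> p <= t -> p <= c -> Fa t = IntF p t - IntF p c.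
Proof.
move=> Ip It pt pc.
have [ql Iq] := low_prop (I_min It).
have qt : qq t <= t by apply: ltW; apply: (lt_le_trans ql); rewrite ge_min lexx.
have qc : qq t <= c by apply: ltW; apply: (lt_le_trans ql); rewrite ge_min lexx orbT.
have Im : I (Num.min p (qq t)).
  have [] := leP p (qq t); done.
set m := Num.min p (qq t).
have mq : m <= qq t by rewrite ge_min lexx orbT.
have mp : m <= p by rewrite ge_min lexx.
rewrite /Fa (@shiftF m (qq t) t Im Iq It mq qt qc).
by rewrite (@shiftF m p t Im Ip It mp pt pc).
Qed.
Lemma Fa_deriv x : I x -> derivable Fa x 1 /\ derive1 Fa x = f x.
Proof.
move=> Ix.
have [pl Ip] := low_prop (I_min Ix).
set p := low _ in pl Ip.
have [xu Iu] := high_prop Ix.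
have px : p < x by apply: (lt_le_trans pl); rewrite ge_min lexx.
have pc : p <= c by apply: ltW; apply: (lt_le_trans pl); rewrite ge_min lexx orbT.
have [d1 d2] := @continuous_FTC1_closed R f p x (high x) xu (intg Ip Iu) px (fc Ix).
have d1' : derivable (IntF p) x 1 := d1.
have d2' : 'D_1 (IntF p) x = f x by rewrite -derive1E; exact: d2.
have [dG DG] := derive_subk (IntF p c) d1'.
pose G := (fun y => IntF p y - IntF p c).
have nG : \forall y \near x, G y = Fa y.
  near=> y; rewrite /G (@Fa_eq p y) //; last by apply: ltW; near: y; exact: lt_nbhsr.
  by near: y; exact: oint_open.
split; first exact: near_eq_derivable nG dG.
by rewrite derive1E -(near_eq_derive _ nG) DG.
Unshelve. all: by end_near. Qed.

End Anti.


Lemma antideriv (R : realType) (a b : \bar R) (f : R -> R) : (a < b)%E ->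
  (forall x, oint a b x -> {for x, continuous f}) ->
  exists F : R -> R, forall x, oint a b x -> derivable F x 1 /\ derive1 F x = f x.
Proof.
move=> ab fc; have [c Ic] := oint_ex ab.
exists (Fa a f c) => x Ix; exact: (Fa_deriv fc Ic Ix).
Qed.
Notation o0 := (@ord0 3).
Notation o1 := (@lift 4 ord0 (@ord0 2)).
Notation o2 := (@lift 4 ord0 (@lift 3 ord0 (@ord0 1))).
Notation o3 := (@lift 4 ord0 (@lift 3 ord0 (@lift 2 ord0 (@ord0 0)))).

Lemma ord4_cases (i : 'I_4) : i = o0 \/ i = o1 \/ i = o2 \/ i = o3.
Proof.
case: i => [[|[|[|[|n]]]] Hi].
- by left; apply: val_inj.
- by right; left; apply: val_inj.
- by right; right; left; apply: val_inj.
- by right; right; right; apply: val_inj.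
- by [].
Qed.


Section Tool.
Variable R : realType.
Implicit Types (f g : R -> R) (t : R).

Lemma d_add f g t : derivable f t 1 -> derivable g t 1 ->
  derivable (fun u => f u + g u) t 1 /\
  derive1 (fun u => f u + g u) t = derive1 f t + derive1 g t.
Proof.
move=> df dg; split; first exact: derivableD df dg.
by rewrite !derive1E -(deriveD df dg).
Qed.

Lemma d_sub f g t : derivable f t 1 -> derivable g t 1 ->
  derivable (fun u => f u - g u) t 1 /\
  derive1 (fun u => f u - g u) t = derive1 f t - derive1 g t.
Proof.
move=> df dg; split; first exact: derivableB df dg.
by rewrite !derive1E -(deriveB df dg).
Qed.

Lemma d_mul f g t : derivable f t 1 -> derivable g t 1 ->
  derivable (fun u => f u * g u) t 1 /\
  derive1 (fun u => f u * g u) t = derive1 f t * g t + f t * derive1 g t.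
Proof.
move=> df dg; split; first exact: derivableM df dg.
rewrite !derive1E; have := deriveM df dg => h.
rewrite -[LHS]/('D_1 (f * g) t) h /GRing.scale /=.
by rewrite addrC mulrC.
Qed.

Lemma d_cos f t : derivable f t 1 ->
  derivable (fun u => cos (f u)) t 1 /\
  derive1 (fun u => cos (f u)) t = - sin (f t) * derive1 f t.
Proof.
move=> df; have := is_derive1_comp (is_derive_cos (f t)) (derivableP df).
case=> h1 h2; split; first exact: h1.
by rewrite derive1E (_ : (fun u => cos (f u)) = cos \o f) // h2 derive1E.
Qed.

Lemma d_sin f t : derivable f t 1 ->
  derivable (fun u => sin (f u)) t 1 /\
  derive1 (fun u => sin (f u)) t = cos (f t) * derive1 f t.
Proof.
move=> df; have := is_derive1_comp (is_derive_sin (f t)) (derivableP df).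
case=> h1 h2; split; first exact: h1.
by rewrite derive1E (_ : (fun u => sin (f u)) = sin \o f) // h2 derive1E.
Qed.
End Tool.

Section Main.
Variable R : realType.
Variable I : set R.
Hypothesis Iopen : forall x, I x -> \forall y \near x, I y.
Variables (Z : R -> 'M[R]_4) (s : 'S_4) (x1 x2 x3 th : R -> R).
Hypothesis Zsm : forall i j, smooth_on I (fun t => Z t i j).
Hypothesis Zo : forall t, I t -> Z t *m (Z t)^T = 1%:M.
Hypothesis s0 : s 0 = 0.
Hypothesis dZ : forall t, I t -> forall i j : 'I_4,
  derive1 (fun u => Z u (s i) j) t =
  (shapeF (x1 t) (x2 t) (x3 t) *m (\matrix_(k, l) Z t (s k) l)) i j.
Hypothesis dth : forall t, I t -> derivable th t 1 /\ derive1 th t = x3 t.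

Definition P t : 'M[R]_4 := \matrix_(k, l) Z t (s k) l.
Definition p (i j : 'I_4) : R -> R := fun t => Z t (s i) j.
Definition G t : 'M[R]_4 := \matrix_(i, j)
  match nat_of_ord i, nat_of_ord j with
  | 0, 0 => 1 | 1, 1 => 1
  | 2, 2 => cos (th t) | 2, 3 => - sin (th t)
  | 3, 2 => sin (th t) | 3, 3 => cos (th t)
  | _, _ => 0 end.
Definition W t : 'M[R]_4 := G t *m P t.

Lemma PP t : I t -> P t *m (P t)^T = 1%:M.
Proof.
move=> It; apply/matrixP => k k'.
have := congr1 (fun M : 'M[R]_4 => M (s k) (s k')) (Zo It).
rewrite !mxE (inj_eq perm_inj) => <-; apply: eq_bigr => l _; rewrite !mxE //.
Qed.

Lemma GG t : G t *m (G t)^T = 1%:M.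
Proof.
have h := cos2Dsin2 (th t).
apply/matrixP => i k; rewrite !mxE !big_ord_recl big_ord0 !mxE.
case: (ord4_cases i) => [->|[->|[->|->]]]; case: (ord4_cases k) => [->|[->|[->|->]]] /=;
  first [ring | (apply: (@eq_trans _ _ (cos (th t) ^+ 2 + sin (th t) ^+ 2)); [ring | by rewrite h])].
Qed.

Lemma WW t : I t -> W t *m (W t)^T = 1%:M.
Proof.
move=> It; rewrite /W trmx_mul mulmxA -(mulmxA (G t)) PP // mulmx1 GG //.
Qed.

Lemma W0 t j : W t o0 j = p o0 j t.
Proof. rewrite /W mxE !big_ord_recl big_ord0 !mxE /= /p; ring. Qed.
Lemma W1 t j : W t o1 j = p o1 j t.
Proof. rewrite /W mxE !big_ord_recl big_ord0 !mxE /= /p; ring. Qed.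
Lemma W2 t j : W t o2 j = cos (th t) * p o2 j t - sin (th t) * p o3 j t.
Proof. rewrite /W mxE !big_ord_recl big_ord0 !mxE /= /p; ring. Qed.
Lemma W3 t j : W t o3 j = sin (th t) * p o2 j t + cos (th t) * p o3 j t.
Proof. rewrite /W mxE !big_ord_recl big_ord0 !mxE /= /p; ring. Qed.

Lemma dp i j t : I t -> derivable (p i j) t 1.
Proof. move=> It; exact: (@Zsm (s i) j 0 t It). Qed.

Lemma dp0 j t : I t -> derive1 (p o0 j) t = x1 t * p o1 j t.
Proof. move=> It; rewrite /p dZ // mxE !big_ord_recl big_ord0 !mxE /=; ring. Qed.
Lemma dp1 j t : I t -> derive1 (p o1 j) t = - x1 t * p o0 j t + x2 t * p o2 j t.
Proof. move=> It; rewrite /p dZ // mxE !big_ord_recl big_ord0 !mxE /=; ring. Qed.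
Lemma dp2 j t : I t -> derive1 (p o2 j) t = - x2 t * p o1 j t + x3 t * p o3 j t.
Proof. move=> It; rewrite /p dZ // mxE !big_ord_recl big_ord0 !mxE /=; ring. Qed.
Lemma dp3 j t : I t -> derive1 (p o3 j) t = - x3 t * p o2 j t.
Proof. move=> It; rewrite /p dZ // mxE !big_ord_recl big_ord0 !mxE /=; ring. Qed.

Lemma dW t i j : I t ->
  derivable (fun u => W u i j) t 1 /\
  derive1 (fun u => W u i j) t =
  (shapeD (x1 t) (x2 t * cos (th t)) (x2 t * sin (th t)) *m W t) i j.
Proof.
move=> It; have [dth1 dth2] := dth It.
have h := cos2Dsin2 (th t).
case: (ord4_cases i) => [->|[->|[->|->]]];
  rewrite [in RHS]mxE !big_ord_recl big_ord0 !W0 !W1 !W2 !W3 !mxE /=.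
- rewrite (_ : (fun u => W u o0 j) = p o0 j); last by apply/funext => u; rewrite W0.
  split; first exact: dp. rewrite dp0 //; ring.
- rewrite (_ : (fun u => W u o1 j) = p o1 j); last by apply/funext => u; rewrite W1.
  split; first exact: dp. rewrite dp1 //.
  apply: (@eq_trans _ _ (- x1 t * p o0 j t + x2 t * (cos (th t) ^+ 2 + sin (th t) ^+ 2) * p o2 j t)).
    by rewrite h; ring.
  ring.
- rewrite (_ : (fun u => W u o2 j) = (fun u => cos (th u) * p o2 j u - sin (th u) * p o3 j u)); last by apply/funext => u; rewrite W2.
  have [d1 e1] := d_mul (d_cos dth1).1 (@dp o2 j t It).
  have [d2 e2] := d_mul (d_sin dth1).1 (@dp o3 j t It).
  have [d3 e3] := d_sub d1 d2.
  split; first exact: d3.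
  rewrite e3 e1 e2 (d_cos dth1).2 (d_sin dth1).2 dth2 dp2 // dp3 //; ring.
- rewrite (_ : (fun u => W u o3 j) = (fun u => sin (th u) * p o2 j u + cos (th u) * p o3 j u)); last by apply/funext => u; rewrite W3.
  have [d1 e1] := d_mul (d_sin dth1).1 (@dp o2 j t It).
  have [d2 e2] := d_mul (d_cos dth1).1 (@dp o3 j t It).
  have [d3 e3] := d_add d1 d2.
  split; first exact: d3.
  rewrite e3 e1 e2 (d_cos dth1).2 (d_sin dth1).2 dth2 dp2 // dp3 //; ring.
Qed.

Hypothesis sx3 : smooth_on I x3.

Lemma th_sm n : sm I n th.
Proof.
case: n => [|n]; first by move=> [|//] _ x Ix; exact: (dth Ix).1.
apply/smS; split; first by move=> x Ix; exact: (dth Ix).1.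
apply: (sm_eqI Iopen (f := x3)); first by move=> x Ix; rewrite (dth Ix).2.
by move/smoothP: sx3.
Qed.

Lemma p_sm n i j : sm I n (p i j).
Proof. by have /smoothP := @Zsm (s i) j. Qed.

Lemma W_sm i j : smooth_on I (fun t => W t i j).
Proof.
apply/smoothP => n.
have [hc hs] := sm_cos_sin Iopen (@th_sm n).
case: (ord4_cases i) => [->|[->|[->|->]]].
- rewrite (_ : (fun u => W u o0 j) = p o0 j); last by apply/funext => u; rewrite W0.
  exact: p_sm.
- rewrite (_ : (fun u => W u o1 j) = p o1 j); last by apply/funext => u; rewrite W1.
  exact: p_sm.
- rewrite (_ : (fun u => W u o2 j) = (fun u => cos (th u) * p o2 j u - sin (th u) * p o3 j u)); last by apply/funext => u; rewrite W2.
  exact: (sm_add Iopen (sm_mul Iopen hc (@p_sm n o2 j)) (sm_opp Iopen (sm_mul Iopen hs (@p_sm n o3 j)))).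
- rewrite (_ : (fun u => W u o3 j) = (fun u => sin (th u) * p o2 j u + cos (th u) * p o3 j u)); last by apply/funext => u; rewrite W3.
  exact: (sm_add Iopen (sm_mul Iopen hs (@p_sm n o2 j)) (sm_mul Iopen hc (@p_sm n o3 j))).
Qed.

End Main.

Lemma ord0_zero : (0 : 'I_4) = o0.
Proof. exact: val_inj. Qed.

Theorem corollary1 (R : realType) (a b : \bar R) (gamma : R -> 'rV[R]_4) :
  (a < b)%E ->
  arclength_curve (oint a b) gamma ->
  admits_frame_of_type (oint a b) gamma (@shapeF R) ->
  admits_frame_of_type (oint a b) gamma (@shapeD R).
Proof.
move=> ab _ [Z [[Zsm [Zo Z0]] [s [s0 [x1 [x2 [x3 [sx1 [sx2 [sx3 dZ]]]]]]]]]].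
have Iopen : forall x, oint a b x -> \forall y \near x, oint a b y.
  by move=> x Ix; exact: oint_open.
have fc : forall x, oint a b x -> {for x, continuous x3}.
  move=> x Ix; apply/differentiable_continuous/derivable1_diffP.
  exact: (sx3 0%N x Ix).
have [th dth] := antideriv ab fc.
exists (W Z s th); split.
  split; first by move=> i j; exact: (W_sm Iopen Zsm dth sx3).
  split; first by move=> t It; exact: (WW s th Zo It).
  move=> t It j; rewrite ord0_zero W0 /p -ord0_zero s0; exact: Z0.
exists 1%g; split; first by rewrite perm1.
exists x1, (fun t => x2 t * cos (th t)), (fun t => x2 t * sin (th t)).
have thsm := th_sm Iopen dth sx3.
split; first exact: sx1.
split.
  apply/smoothP => n; apply: (sm_mul Iopen); first by move/smoothP: sx2.
  exact: (sm_cos_sin Iopen (thsm n)).1.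
split.
  apply/smoothP => n; apply: (sm_mul Iopen); first by move/smoothP: sx2.
  exact: (sm_cos_sin Iopen (thsm n)).2.
move=> t It i j.
have -> : \matrix_(k, l) W Z s th t ((1%g : 'S_4) k) l = W Z s th t.
  by apply/matrixP => k l; rewrite mxE perm1.
rewrite perm1.
exact: (dW Zsm dZ dth i j It).2.
Qed.
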